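(* For every fixed $\theta\in\mathbb R$, the map $\tau\mapsto s_1(\theta,\tau)=\mathbb E[Q\mid\Theta=\theta,A(\tau)=1]$ is strictly increasing on $(-x_u,x_q)$.
   Context: Setup. Let $Q\in\{0,1\}$ be a random variable with $\mathbb P(Q=1)=\pi\in(0,1)$, and let $(\Theta,\Gamma)$ be a real-valued random vector whose conditional joint density given $Q=1$ is $h_q(\theta,\gamma)$ and given $Q=0$ is $h_u(\theta,\gamma)$, both strictly positive on $\mathbb R^2$. Monotone likelihood ratio assumption: $l(\theta,\gamma)=h_q(\theta,\gamma)/h_u(\theta,\gamma)$ is continuous and strictly increasing in each of $\theta$ and $\gamma$, and for each $\theta$ the map $\gamma\mapsto l(\theta,\gamma)$ has infimum $0$ and supremum $+\infty$. Fix payoffs $x_q>0$, $x_u>0$. For $\tau\in(-x_u,x_q)$ let $A(\tau)=\mathbb 1\{l(\Theta,\Gamma)>\frac{(1-\pi)(x_u+\tau)}{\pi(x_q-\tau)}\}$. Define $s_1(\theta,\tau)=\mathbb E[Q\mid\Theta=\theta,A(\tau)=1]$. *)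

(* Defs.v *)
From HB Require Import structures.
From mathcomp Require Import all_boot all_order all_algebra.
From mathcomp Require Import all_classical all_reals all_analysis.
Set Implicit Arguments. Unset Strict Implicit. Unset Printing Implicit Defensive.
Import Order.TTheory GRing.Theory Num.Theory.
Import numFieldNormedType.Exports.
Local Open Scope classical_set_scope.
Local Open Scope ring_scope.

Section Defs.
Variable R : realType.

Definition lr (hq hu : R -> R -> R) (th g : R) : R := hq th g / hu th g.

Definition thresh (pi xq xu tau : R) : R :=
  ((1 - pi) * (xu + tau)) / (pi * (xq - tau)).

(* the gamma-section {gamma | A(tau)=1} at Theta = theta *)
Definition accept_set (hq hu : R -> R -> R) (pi xq xu th tau : R) : set R :=
  [set g | thresh pi xq xu tau < lr hq hu th g].

(* s_1(theta,tau) = E[Q | Theta = theta, A(tau) = 1], computed by Bayes'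
   rule from the conditional densities:
     P(Q=1, Theta in dtheta, A(tau)=1) = pi * (int_{A-section} h_q(theta,g) dg) dtheta
     P(Q=0, Theta in dtheta, A(tau)=1) = (1-pi) * (int_{A-section} h_u(theta,g) dg) dtheta *)
Definition s1 (hq hu : R -> R -> R) (pi xq xu th tau : R) : R :=
  let D := accept_set hq hu pi xq xu th tau in
  let Iq := Rintegral (@lebesgue_measure R) D (hq th) in
  let Iu := Rintegral (@lebesgue_measure R) D (hu th) in
  (pi * Iq) / (pi * Iq + (1 - pi) * Iu).

Definition joint_density (h : R -> R -> R) : Prop :=
  (forall th g, 0 < h th g) /\
  measurable_fun setT (fun p : R * R => h p.1 p.2) /\
  (\int[(@lebesgue_measure R \x @lebesgue_measure R)%E]_p (h p.1 p.2)%:E = 1)%E.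

End Defs.

(* Main.v *)
Require Import Defs.
From HB Require Import structures.
From mathcomp Require Import all_boot all_order all_algebra.
From mathcomp Require Import all_classical all_reals all_analysis.
From mathcomp Require Import ring lra measurable_realfun.
Import Order.TTheory GRing.Theory Num.Theory.
Import numFieldNormedType.Exports.
Local Open Scope classical_set_scope.
Local Open Scope ring_scope.

Section Helpers.
Variable R : realType.
Local Notation mu := (@lebesgue_measure R).

Lemma Rint_pos (D : set R) (f : R -> R) :
  measurable D -> mu.-integrable D (EFin \o f) ->
  (forall x, D x -> 0 < f x) -> mu D != 0%E ->
  0 < Rintegral mu D f.
Proof.
move=> mD intf fpos muD.
have ge0 : 0 <= Rintegral mu D f by apply: Rintegral_ge0 => x /fpos/ltW.
rewrite lt_neqAle ge0 andbT; apply/eqP => H0.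
have fin := @integrable_fin_num _ _ _ mu D mD _ intf.
have I0 : (\int[mu]_(x in D) (EFin \o f) x = 0)%E.
  by rewrite -(fineK fin); rewrite /Rintegral in H0; rewrite -H0.
have Iabs : (\int[mu]_(x in D) `|(EFin \o f) x| = 0)%E.
  rewrite -I0; apply: eq_integral => x /set_mem Dx /=.
  by rewrite ger0_norm // ltW // fpos.
have /(ae_eq_integral_abs mu mD (measurable_int mu intf)) := Iabs.
move=> [N [mN N0 sub]].
move/negP: muD; apply; apply/eqP/eqP; rewrite -measure_le0 -N0.
apply: le_measure; rewrite ?inE //.
move=> x Dx; apply: sub => /= H; move: (H Dx) => /= /eqP.
by rewrite eqe (gt_eqF (fpos _ Dx)).
Qed.

Lemma itv_measure_neq0 (S : set R) (x1 x2 : R) :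
  measurable S -> x1 < x2 -> `[x1, x2] `<=` S -> mu S != 0%E.
Proof.
move=> mS lt12 sub.
have : (mu `[x1, x2] <= mu S)%E.
  by apply: le_measure; rewrite ?inE //.
rewrite lebesgue_measure_itv /= lte_fin lt12 => H.
rewrite -measure_gt0; apply: lt_le_trans H; rewrite -EFinD lte_fin subr_gt0 //.
Qed.
End Helpers.

Theorem mainTheorem3 (R : realType) (pi xq xu : R) (hq hu : R -> R -> R) :
  0 < pi < 1 ->
  0 < xq -> 0 < xu ->
  joint_density hq -> joint_density hu ->
  (* regularity: conditional sections given Theta = theta are integrable *)
  (forall th, (@lebesgue_measure R).-integrable setT (fun g => (hq th g)%:E)) ->
  (forall th, (@lebesgue_measure R).-integrable setT (fun g => (hu th g)%:E)) ->
  (* monotone likelihood ratio assumption *)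
  continuous (fun p : R * R => lr hq hu p.1 p.2) ->
  (forall g th1 th2, th1 < th2 -> lr hq hu th1 g < lr hq hu th2 g) ->
  (forall th g1 g2, g1 < g2 -> lr hq hu th g1 < lr hq hu th g2) ->
  (forall th (e : R), 0 < e -> exists g, lr hq hu th g < e) ->
  (forall th (M : R), exists g, M < lr hq hu th g) ->
  forall th tau1 tau2 : R,
    - xu < tau1 -> tau1 < tau2 -> tau2 < xq ->
    s1 hq hu pi xq xu th tau1 < s1 hq hu pi xq xu th tau2.
Proof.
move=> /andP[pi0 pi1] xq0 xu0 [hqpos _] [hupos _] iq iu Lc _ Lmono Linf Lsup th t1 t2 t1l t12 t2r.
set mu := @lebesgue_measure R.
set L := fun g => lr hq hu th g.
have Lle : forall x y, x <= y -> L x <= L y.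
  move=> x y; rewrite le_eqVlt => /predU1P[->//|/Lmono/ltW]; exact.
have Lcont : continuous L.
  move=> g.
  have h1 : {for g, continuous (fun g : R => (th, g))}.
    rewrite /prop_for /continuous_at.
    exact: (@cvg_pair R R R (nbhs g) (nbhs th) (nbhs g) _ _ _ (fun _ => th) id (cvg_cst _) cvg_id).
  exact: (continuous_comp h1 (Lc (th, g))).
set c1 := thresh pi xq xu t1; set c2 := thresh pi xq xu t2.
have c1pos : 0 < c1.
  rewrite /c1 /thresh divr_gt0 // ?mulr_gt0 // ?subr_gt0 //; lra.
have c12 : c1 < c2.
  rewrite -subr_gt0.
  have -> : c2 - c1 = ((1 - pi) * (xu + xq) * (t2 - t1)) / (pi * (xq - t1) * (xq - t2)).
    rewrite /c1 /c2 /thresh; field.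
    apply/and3P; split; rewrite ?subr_eq0; try (apply/negP => /eqP H); try lra.
  rewrite divr_gt0 // ?mulr_gt0 // ?subr_gt0 //; lra.
have c2pos : 0 < c2 by lra.
set D1 := accept_set hq hu pi xq xu th t1.
set D2 := accept_set hq hu pi xq xu th t2.
set E := D1 `\` D2.
have mopen : forall c, measurable [set g | c < L g].
  move=> c; apply: open_measurable.
  have -> : [set g | c < L g] = L @^-1` [set x | c < x] by [].
  by apply: open_comp; [move=> x _; exact: Lcont | exact: open_gt].
have mD1 : measurable D1 := mopen c1.
have mD2 : measurable D2 := mopen c2.
have mE : measurable E := measurableD mD1 mD2.
have D21 : D2 `<=` D1.
  move=> g; rewrite /D1 /D2 /accept_set /= -/c1 -/c2 => h; exact: lt_trans h.
have D1E : D1 = D2 `|` E.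
  apply/seteqP; split => g.
    by move=> h; case: (pselect (D2 g)) => h2; [left|right].
  by case=> [/D21|[]].
have disj : [disjoint D2 & E].
  by apply/disj_setPS => g [h2 [_ h2n]].
have iqS : forall X : set R, measurable X -> mu.-integrable X (EFin \o hq th).
  by move=> X mX; apply: (@integrableS _ _ _ mu setT X _ measurableT mX (subsetT _) (iq th)).
have iuS : forall X : set R, measurable X -> mu.-integrable X (EFin \o hu th).
  by move=> X mX; apply: (@integrableS _ _ _ mu setT X _ measurableT mX (subsetT _) (iu th)).
have iuZ : forall X : set R, measurable X -> mu.-integrable X (EFin \o (fun x => c2 * hu th x)).
  move=> X mX.
  have -> : EFin \o (fun x => c2 * hu th x) = (fun x => c2%:E * (EFin \o hu th) x)%E.
    by apply/funext => x; rewrite /= EFinM.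
  exact: (@integrableZl _ _ _ mu X mX c2 _ (iuS X mX)).
have iqd : forall X : set R, measurable X -> mu.-integrable X (EFin \o (fun x => hq th x - c2 * hu th x)).
  move=> X mX.
  have -> : EFin \o (fun x => hq th x - c2 * hu th x) = ((EFin \o hq th) \- (EFin \o (fun x => (c2 * hu th x)%R)))%E.
    by apply/funext => x; rewrite /= EFinB.
  exact: (@integrableB _ _ _ mu X mX _ _ (iqS X mX) (iuZ X mX)).
have mU : measurable (D2 `|` E) by apply: measurableU.
rewrite /s1 /= -/D1 -/D2 D1E.
rewrite (@Rintegral_setU _ _ _ mu D2 E (hq th) mD2 mE (iqS _ mU) disj).
rewrite (@Rintegral_setU _ _ _ mu D2 E (hu th) mD2 mE (iuS _ mU) disj).
set a := Rintegral mu D2 (hq th).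
set b := Rintegral mu D2 (hu th).
set p := Rintegral mu E (hq th).
set q := Rintegral mu E (hu th).
have [g0 Hg0] := Lsup th c2.
have muD2 : mu D2 != 0%E.
  apply: (@itv_measure_neq0 R D2 g0 (g0 + 1) mD2); first lra.
  move=> x /=; rewrite in_itv /= => /andP[h _]; exact: (lt_le_trans Hg0 (Lle _ _ h)).
have bpos : 0 < b.
  exact: (@Rint_pos R _ _ mD2 (iuS D2 mD2) (fun x _ => hupos th x) muD2).
have hdiff : 0 < Rintegral mu D2 (fun x => hq th x - c2 * hu th x).
  apply: (@Rint_pos R _ _ mD2 (iqd D2 mD2) _ muD2) => x Dx.
  rewrite subr_gt0; move: Dx; rewrite /D2 /accept_set /= -/c2 /lr ltr_pdivlMr //.
have eq1 : Rintegral mu D2 (fun x => hq th x - c2 * hu th x) = a - c2 * b.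
  rewrite (@RintegralB _ _ _ mu D2 _ _ mD2 (iqS D2 mD2) (iuZ D2 mD2)).
  by rewrite (@RintegralZl _ _ _ mu D2 _ c2 mD2 (iuS D2 mD2)).
have ple : p <= c2 * q.
  have := @le_Rintegral _ _ _ mu E (hq th) (fun x => c2 * hu th x) mE (iqS E mE) (iuZ E mE).
  rewrite (@RintegralZl _ _ _ mu E _ c2 mE (iuS E mE)); apply => x [_ nD2].
  move/negP: nD2; rewrite /D2 /accept_set /= -/c2 /lr -leNgt ler_pdivrMr //.
have pge0 : 0 <= p by apply: Rintegral_ge0 => x _; exact/ltW.
have [a0 Ha0] := Linf th c1 c1pos.
have a0b0 : a0 <= g0.
  rewrite leNgt; apply/negP => /ltW/Lle; rewrite /L /=; lra.
have La : L a0 <= L g0 by apply: Lle.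
have ivt : forall m, c1 <= m <= c2 -> exists2 x, x \in `[a0, g0] & L x = m.
  move=> m /andP[h1 h2]; apply: IVT => //; first exact: continuous_subspaceT.
  rewrite ge_min le_max; apply/andP; split; apply/orP; [left|right]; rewrite /L /=; lra.
have [x1 _ Lx1] := ivt ((2 * c1 + c2) / 3) ltac:(apply/andP; split; lra).
have [x2 _ Lx2] := ivt ((c1 + 2 * c2) / 3) ltac:(apply/andP; split; lra).
have x12 : x1 < x2.
  rewrite ltNge; apply/negP => /Lle; lra.
have muE : mu E != 0%E.
  apply: (@itv_measure_neq0 R E x1 x2 mE x12).
  move=> x /=; rewrite in_itv /= => /andP[h1 h2]; split.
    have := Lle _ _ h1; rewrite /D1 /accept_set /= -/c1; rewrite /L /= in Lx1 *; lra.
  have := Lle _ _ h2; rewrite /D2 /accept_set /= -/c2; rewrite /L /= in Lx2 *; lra.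
have qpos : 0 < q.
  exact: (@Rint_pos R _ _ mE (iuS E mE) (fun x _ => hupos th x) muE).
have apos : c2 * b < a by lra.
have key : p * b < a * q.
  have h1 : p * b <= c2 * q * b by rewrite ler_wpM2r // ltW.
  have h2 : c2 * b * q < a * q by rewrite ltr_pM2r.
  lra.
have d1 : 0 < pi * (a + p) + (1 - pi) * (b + q).
  have : 0 < c2 * b by rewrite mulr_gt0.
  move=> ?; rewrite addr_gt0 // ?mulr_gt0 //; lra.
have d2 : 0 < pi * a + (1 - pi) * b.
  have : 0 < c2 * b by rewrite mulr_gt0.
  move=> ?; rewrite addr_gt0 // ?mulr_gt0 //; lra.
rewrite -subr_gt0.
have -> : pi * a / (pi * a + (1 - pi) * b) - pi * (a + p) / (pi * (a + p) + (1 - pi) * (b + q))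
  = (pi * (1 - pi) * (a * q - p * b)) / ((pi * a + (1 - pi) * b) * (pi * (a + p) + (1 - pi) * (b + q))).
  field; apply/andP; split; rewrite gt_eqF //.
rewrite divr_gt0 // ?mulr_gt0 // ?subr_gt0 //; lra.
Qed.
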